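(* Let $\alpha,\beta\ge0$, $m_\lambda>0$, $m\in\mathbb N$, $a\ge0$, $b\ge\frac12$, fix $t\ge0$ and a real number $W^0_t$, and set $V=m_\lambda\exp((\beta-\frac12)t+W^0_t)$, $$f(x)=V\tfrac{\alpha}{2}x+\tfrac{x^2}{2},\qquad g(x)=-\Big(\big(\tfrac{\alpha}{2}-\beta\big)V+x\Big),$$ $L\varphi=\partial_x(f\,\partial_x\varphi)+g\,\partial_x\varphi$ and $\sigma(\varphi)=\varphi-\partial_x(x\varphi)$. Then for $u\in H_1:=W_0^{m,2}(a,b)$, $$\langle Lu,u\rangle_{H_1}+\frac12\sup_{\varphi\in H_1,\|\varphi\|_{H_1}=1}|\langle u,\sigma\varphi\rangle_{H_1}|^2\le C_{\alpha,\beta,m}\,(1+V)\,\|u\|_{H_1}^2,$$ where $C_{\alpha,\beta,m}$ is a constant depending on $\alpha,\beta,m$.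
   Context: $W_0^{m,2}(a,b)$ is the closure of $C_c^\infty((0,\infty))$ under the norm $\|f\|_{H_1}=\big(\sum_{\gamma=0}^m\int_0^\infty(1+x^2)^{2a+2\gamma b}|\partial_x^\gamma f|^2dx\big)^{1/2}$, with inner product $\langle u,v\rangle_{H_1}=\sum_{\gamma=0}^m\int_0^\infty(1+x^2)^{2a+2\gamma b}\partial_x^\gamma u\,\partial_x^\gamma v\,dx$. *)

(* Defs.v *)
From Stdlib Require Import Reals.
From Coquelicot Require Import Coquelicot.
Open Scope R_scope.

(* phi : R -> R is (the extension by zero of) an element of C_c^infty((0,oo)):
   infinitely differentiable everywhere, and vanishing outside some [r,R]
   with 0 < r <= R. *)
Definition test_fn (phi : R -> R) : Prop :=
  (forall (n : nat) (x : R), ex_derive (Derive_n phi n) x) /\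
  exists r R0 : R, 0 < r /\ r <= R0 /\
    forall x, (x < r \/ R0 < x) -> phi x = 0.

Definition weight (a b : R) (gamma : nat) (x : R) : R :=
  Rpower (1 + x ^ 2) (2 * a + 2 * INR gamma * b).

Definition int0inf (h : R -> R) : R :=
  RInt_gen h (at_point 0) (Rbar_locally p_infty).

Definition ipH1 (m : nat) (a b : R) (u v : R -> R) : R :=
  sum_f_R0 (fun gamma =>
     int0inf (fun x => weight a b gamma x * Derive_n u gamma x * Derive_n v gamma x)) m.

Definition normH1 (m : nat) (a b : R) (u : R -> R) : R := sqrt (ipH1 m a b u u).

Definition Vcoef (beta mlam t W : R) : R := mlam * exp ((beta - 1/2) * t + W).

Definition fcoef (alpha V : R) (x : R) : R := V * (alpha / 2) * x + x ^ 2 / 2.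
Definition gcoef (alpha beta V : R) (x : R) : R := - ((alpha / 2 - beta) * V + x).

Definition Lop (alpha beta V : R) (phi : R -> R) : R -> R :=
  fun x => Derive (fun y => fcoef alpha V y * Derive phi y) x
           + gcoef alpha beta V x * Derive phi x.

Definition sigma_op (phi : R -> R) : R -> R :=
  fun x => phi x - Derive (fun y => y * phi y) x.

(* Main.v *)
Require Import Defs.
From Stdlib Require Import Reals Lra Lia FunctionalExtensionality.
From Coquelicot Require Import Coquelicot.
Open Scope R_scope.

Lemma int0inf_RInt (h : R -> R) (M : R) :
  0 <= M -> (forall x, M <= x -> h x = 0) ->
  (forall x, continuous h x) ->
  int0inf h = RInt h 0 M.
Proof.
  intros HM Hz Hc.
  unfold int0inf.
  apply is_RInt_gen_unique.
  replace (RInt h 0 M) with (plus (RInt h 0 M) 0) by (unfold plus; simpl; ring).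
  assert (H1 : is_RInt_gen h (at_point 0) (at_point M) (RInt h 0 M)).
  { apply is_RInt_gen_at_point.
    apply (RInt_correct (V:=R_CompleteNormedModule)). apply ex_RInt_continuous. intros; apply Hc. }
  assert (H2 : is_RInt_gen h (at_point M) (Rbar_locally p_infty) 0).
  { assert (H0 : is_RInt_gen (Derive (fun _ : R => 0)) (at_point M) (Rbar_locally p_infty) (0 - 0)).
    { apply is_RInt_gen_Derive.
      - apply Filter_prod with (fun _ => True) (fun _ => True).
        + easy.
        + exists 0; easy.
        + intros; apply ex_derive_const.
      - apply Filter_prod with (fun _ => True) (fun _ => True).
        + easy.
        + exists 0; easy.
        + intros. apply (continuous_ext (fun _ => 0)).
          * intros; rewrite Derive_const; reflexivity.
          * apply continuous_const.
      - apply filterlim_const.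
      - apply filterlim_const. }
    replace (0:R) with (0 - 0) at 1 by ring.
    revert H0. apply is_RInt_gen_ext.
    apply Filter_prod with (fun x => x = M) (fun y => M < y).
    + reflexivity.
    + exists M; tauto.
    + intros x y Hx Hy t Ht. simpl in *. subst x.
      rewrite Derive_const. symmetry. apply Hz.
      rewrite Rmin_left in Ht; lra. }
  exact (is_RInt_gen_Chasles h M _ _ H1 H2).
Qed.


Definition hco (alpha beta V g x : R) := beta * V + g * (V * (alpha / 2) + x).
Definition kco (g : R) := g * (g - 1) / 2.
Definition Gco (p g alpha beta V x : R) :=
  hco alpha beta V g x - (V * (alpha / 2) + x) - 2 * p * x * fcoef alpha V x / (1 + x ^ 2).
Definition cco (p g x : R) := 1 - g + 2 * p * x ^ 2 / (1 + x ^ 2).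
Definition Gder (p g alpha V x : R) :=
  g - 1 - 2 * p * (V * alpha * x / (1 + x ^ 2) ^ 2 + (x ^ 4 + 3 * x ^ 2) / (2 * (1 + x ^ 2) ^ 2)).
Definition xcder (p g x : R) := 1 - g + 2 * p * (x ^ 4 + 3 * x ^ 2) / (1 + x ^ 2) ^ 2.
Definition Rco (p g alpha beta V x : R) :=
  kco g - / 2 * (2 * p * x / (1 + x ^ 2) * Gco p g alpha beta V x + Gder p g alpha V x)
  + / 2 * cco p g x ^ 2
  - / 2 * (2 * p * x / (1 + x ^ 2) * x * cco p g x + xcder p g x).

Lemma Eder (w v0 v1 v2 : R -> R) (p g alpha beta V x : R) :
  is_derive w x (w x * (2 * p * x / (1 + x ^ 2))) ->
  is_derive v0 x (v1 x) -> is_derive v1 x (v2 x) ->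
  is_derive (fun y => w y * (fcoef alpha V y * v0 y * v1 y
        + / 2 * Gco p g alpha beta V y * v0 y ^ 2
        + / 2 * y * cco p g y * v0 y ^ 2)) x
   (w x * (fcoef alpha V x * v2 x + hco alpha beta V g x * v1 x + kco g * v0 x) * v0 x
    + / 2 * w x * (x * v1 x + cco p g x * v0 x) ^ 2
    - w x * (x ^ 2 / 2 - fcoef alpha V x) * v1 x ^ 2
    - w x * Rco p g alpha beta V x * v0 x ^ 2).
Proof.
  intros Hw H0 H1.
  unfold Rco, Gder, xcder, Gco, cco, hco, kco, fcoef.
  auto_derive.
  - repeat split; try (eexists; eassumption); nra.
  - replace (Derive (fun y => w y) x) with (w x * (2 * p * x / (1 + x ^ 2)))
      by (symmetry; apply is_derive_unique; exact Hw).
    replace (Derive (fun y => v0 y) x) with (v1 x)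
      by (symmetry; apply is_derive_unique; exact H0).
    replace (Derive (fun y => v1 y) x) with (v2 x)
      by (symmetry; apply is_derive_unique; exact H1).
    assert (1 + x * (x * 1) <> 0) by nra.
    assert (1 + x ^ 2 <> 0) by nra.
    field; auto.
Qed.

Lemma cont_of_ex (f : R -> R) (x : R) : ex_derive f x -> continuous f x.
Proof. intros H. exact (ex_derive_continuous (K:=R_AbsRing) (V:=R_NormedModule) f x H). Qed.

Lemma RInt_plus' (f g : R -> R) a b : ex_RInt f a b -> ex_RInt g a b ->
  RInt (fun x => f x + g x) a b = RInt f a b + RInt g a b.
Proof. intros H1 H2. exact (RInt_plus f g a b H1 H2). Qed.
Lemma RInt_minus' (f g : R -> R) a b : ex_RInt f a b -> ex_RInt g a b ->
  RInt (fun x => f x - g x) a b = RInt f a b - RInt g a b.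
Proof. intros H1 H2. exact (RInt_minus f g a b H1 H2). Qed.
Lemma RInt_scal' (f : R -> R) a b k : ex_RInt f a b ->
  RInt (fun x => k * f x) a b = k * RInt f a b.
Proof. intros H1. exact (RInt_scal f a b k H1). Qed.
Lemma RInt_ext' (f g : R -> R) a b : (forall x, f x = g x) -> RInt f a b = RInt g a b.
Proof. intros H. apply RInt_ext. intros; apply H. Qed.
Lemma exc (f : R -> R) a b : (forall x, continuous f x) -> ex_RInt f a b.
Proof. intros H. apply (ex_RInt_continuous (V:=R_CompleteNormedModule)). intros; apply H. Qed.

Ltac cont Hs := intros; apply cont_of_ex; auto_derive;
  repeat split; try (eexists; now eauto using Hs); try nra.

Lemma level_L (w v0 v1 v2 v3 : R -> R) (p g alpha beta V M K : R) :
  (forall x, is_derive w x (w x * (2 * p * x / (1 + x ^ 2)))) ->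
  (forall x, 0 < w x) ->
  (forall x, is_derive v0 x (v1 x)) ->
  (forall x, is_derive v1 x (v2 x)) ->
  (forall x, is_derive v2 x (v3 x)) ->
  0 <= M -> v0 0 = 0 -> v0 M = 0 -> 0 <= alpha -> 0 <= V ->
  (forall x, 0 <= x -> Rco p g alpha beta V x <= K * (1 + V)) ->
  RInt (fun x => w x * (fcoef alpha V x * v2 x + hco alpha beta V g x * v1 x + kco g * v0 x) * v0 x) 0 M
  + / 2 * RInt (fun x => w x * (x * v1 x + cco p g x * v0 x) ^ 2) 0 M
  <= K * (1 + V) * RInt (fun x => w x * v0 x * v0 x) 0 M.
Proof.
  intros Hw Hwp H0 H1 H2 HM Hz0 HzM Ha HV HR.
  set (E' := fun x => w x * (fcoef alpha V x * v2 x + hco alpha beta V g x * v1 x + kco g * v0 x) * v0 x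
    + / 2 * w x * (x * v1 x + cco p g x * v0 x) ^ 2
    - w x * (x ^ 2 / 2 - fcoef alpha V x) * v1 x ^ 2
    - w x * Rco p g alpha beta V x * v0 x ^ 2).
  set (E := fun y => w y * (fcoef alpha V y * v0 y * v1 y
        + / 2 * Gco p g alpha beta V y * v0 y ^ 2
        + / 2 * y * cco p g y * v0 y ^ 2)).
  assert (HE : RInt E' 0 M = 0).
  { assert (HI : is_RInt E' 0 M (minus (E M) (E 0))).
    { apply (is_RInt_derive E E').
      - intros; apply Eder; auto.
      - unfold E', Rco, Gder, xcder, Gco, cco, hco, kco, fcoef. cont H0. }
    rewrite (is_RInt_unique E' 0 M _ HI).
    unfold E. rewrite Hz0, HzM. unfold minus, plus, opp; simpl. ring. }
  assert (cA : forall x, continuous (fun x => w x * (fcoef alpha V x * v2 x + hco alpha beta V g x * v1 x + kco g * v0 x) * v0 x) x)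
    by (unfold hco, kco, fcoef; cont H0).
  assert (cB : forall x, continuous (fun x => w x * (x * v1 x + cco p g x * v0 x) ^ 2) x)
    by (unfold cco; cont H0).
  assert (cN : forall x, continuous (fun x => w x * v0 x * v0 x) x) by cont H0.
  assert (cE : forall x, continuous E' x)
    by (unfold E', Rco, Gder, xcder, Gco, cco, hco, kco, fcoef; cont H0).
  rewrite <- RInt_scal' by (apply exc; exact cB).
  rewrite <- RInt_plus' by (apply exc; try exact cA; unfold cco; cont H0).
  replace (K * (1 + V) * RInt (fun x => w x * v0 x * v0 x) 0 M)
    with (RInt (fun x => E' x + K * (1 + V) * (w x * v0 x * v0 x)) 0 M).
  2:{ rewrite RInt_plus' by (apply exc; auto; cont H0).
      rewrite RInt_scal' by (apply exc; auto).
      rewrite HE. exact (Rplus_0_l _). }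
  apply RInt_le; auto.
  - apply exc; unfold hco, kco, fcoef, cco; cont H0.
  - apply exc; unfold E', Rco, Gder, xcder, Gco, cco, hco, kco, fcoef; cont H0.
  - intros x Hx. unfold E'.
    assert (Hf : x ^ 2 / 2 - fcoef alpha V x = - (V * alpha / 2 * x)) by (unfold fcoef; field).
    rewrite Hf.
    specialize (HR x ltac:(lra)). specialize (Hwp x).
    assert (0 <= V * alpha / 2 * x) by (assert (0 <= V*alpha) by (apply Rmult_le_pos; lra); nra).
    assert (0 <= w x * (V * alpha / 2 * x) * v1 x ^ 2)
      by (apply Rmult_le_pos; [apply Rmult_le_pos; lra| apply pow2_ge_0]).
    assert (w x * Rco p g alpha beta V x * v0 x ^ 2 <= w x * (K * (1 + V)) * v0 x ^ 2).
    { apply Rmult_le_compat_r; [apply pow2_ge_0|]. apply Rmult_le_compat_l; lra. }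
    nra.
Qed.


Lemma Sder (w v0 v1 ps0 ps1 : R -> R) (p g x : R) :
  is_derive w x (w x * (2 * p * x / (1 + x ^ 2))) ->
  is_derive v0 x (v1 x) -> is_derive ps0 x (ps1 x) ->
  is_derive (fun y => w y * y * v0 y * ps0 y) x
   (w x * ps0 x * (x * v1 x + cco p g x * v0 x) - w x * v0 x * (- (x * ps1 x + g * ps0 x))).
Proof.
  intros Hw H0 H1.
  unfold cco.
  auto_derive.
  - repeat split; try (eexists; eassumption); nra.
  - replace (Derive (fun y => w y) x) with (w x * (2 * p * x / (1 + x ^ 2)))
      by (symmetry; apply is_derive_unique; exact Hw).
    replace (Derive (fun y => v0 y) x) with (v1 x)
      by (symmetry; apply is_derive_unique; exact H0).
    replace (Derive (fun y => ps0 y) x) with (ps1 x)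
      by (symmetry; apply is_derive_unique; exact H1).
    assert (1 + x ^ 2 <> 0) by nra.
    field; auto.
Qed.

Lemma level_S (w v0 v1 v2 ps0 ps1 ps2 : R -> R) (p g M : R) :
  (forall x, is_derive w x (w x * (2 * p * x / (1 + x ^ 2)))) ->
  (forall x, 0 < w x) ->
  (forall x, is_derive v0 x (v1 x)) ->
  (forall x, is_derive v1 x (v2 x)) ->
  (forall x, is_derive ps0 x (ps1 x)) ->
  (forall x, is_derive ps1 x (ps2 x)) ->
  0 <= M -> v0 0 = 0 -> v0 M = 0 ->
  RInt (fun x => w x * v0 x * (- (x * ps1 x + g * ps0 x))) 0 M
   = RInt (fun x => w x * ps0 x * (x * v1 x + cco p g x * v0 x)) 0 M /\
  forall S, 0 <= RInt (fun x => w x * (x * v1 x + cco p g x * v0 x) ^ 2) 0 M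
     - 2 * S * RInt (fun x => w x * ps0 x * (x * v1 x + cco p g x * v0 x)) 0 M
     + S ^ 2 * RInt (fun x => w x * ps0 x * ps0 x) 0 M.
Proof.
  intros Hw Hwp H0 H1 P0 P1 HM Hz0 HzM.
  split.
  - set (E' := fun x => w x * ps0 x * (x * v1 x + cco p g x * v0 x) - w x * v0 x * (- (x * ps1 x + g * ps0 x))).
    set (E := fun y => w y * y * v0 y * ps0 y).
    assert (HE : RInt E' 0 M = 0).
    { assert (HI : is_RInt E' 0 M (minus (E M) (E 0))).
      { apply (is_RInt_derive E E').
        - intros; apply Sder; auto.
        - unfold E', cco. cont H0. }
      rewrite (is_RInt_unique E' 0 M _ HI).
      assert (EM : E M = 0) by (unfold E; rewrite HzM; ring).
      assert (E0 : E 0 = 0) by (unfold E; rewrite Hz0; ring).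
      rewrite EM, E0. exact (minus_eq_zero (G:=R_AbelianGroup) 0). }
    assert (Hex : RInt E' 0 M = RInt (fun x => w x * ps0 x * (x * v1 x + cco p g x * v0 x)) 0 M
          - RInt (fun x => w x * v0 x * (- (x * ps1 x + g * ps0 x))) 0 M).
    { apply RInt_minus'; apply exc; unfold cco; cont H0. }
    lra.
  - intros S.
    assert (Hn : 0 <= RInt (fun x => w x * ((x * v1 x + cco p g x * v0 x) - S * ps0 x) ^ 2) 0 M).
    { apply RInt_ge_0; auto.
      - apply exc; unfold cco; cont H0.
      - intros x _. specialize (Hwp x). apply Rmult_le_pos; [lra| apply pow2_ge_0]. }
    replace (RInt (fun x => w x * ((x * v1 x + cco p g x * v0 x) - S * ps0 x) ^ 2) 0 M)
      with (RInt (fun x => (w x * (x * v1 x + cco p g x * v0 x) ^ 2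
              - (2 * S) * (w x * ps0 x * (x * v1 x + cco p g x * v0 x)))
              + S ^ 2 * (w x * ps0 x * ps0 x)) 0 M) in Hn.
    2:{ apply RInt_ext'. intros; ring. }
    rewrite RInt_plus', RInt_minus', !RInt_scal' in Hn; try (apply exc; unfold cco; cont H0).
    exact Hn.
Qed.


Definition Kc (mm P alpha : R) :=
  mm ^ 2 / 2 + (1 + mm) ^ 2 / 2 + 2 * P + P ^ 2 + 2 * alpha * P + alpha * P ^ 2.

Lemma le_div1 a b : 0 < b -> a <= b -> a / b <= 1.
Proof. intros H1 H2. exact (proj1 (Rdiv_le_1 a b H1) H2). Qed.

Lemma Rco_bound p P g mm alpha beta V x :
  0 <= p <= P -> 0 <= g <= mm -> 0 <= alpha -> 0 <= beta -> 0 <= V -> 0 <= x ->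
  Rco p g alpha beta V x <= Kc mm P alpha * (1 + V).
Proof.
  intros Hp Hg Ha Hb HV Hx.
  set (s := 1 + x ^ 2).
  assert (Hs : 1 <= s) by (unfold s; nra).
  set (t1 := x ^ 2 / s). set (t2 := x / s). set (t3 := x / s ^ 2).
  set (t4 := (x ^ 4 + 3 * x ^ 2) / s ^ 2). set (t5 := x ^ 3 / s ^ 2). set (t6 := x ^ 4 / s ^ 2).
  assert (HR : Rco p g alpha beta V x =
    (kco g + / 2 * (1 - g) ^ 2 + 2 * p * (1 - g) * t1 + p ^ 2 * t6 - p * t4 / 2)
    + V * (- p * t2 * (beta + (g - 1) * alpha / 2) + p ^ 2 * alpha * t5 + p * alpha * t3)).
  { unfold Rco, Gder, xcder, Gco, cco, hco, kco, fcoef, t1, t2, t3, t4, t5, t6, s.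
    field. nra. }
  rewrite HR.
  assert (Hs2 : 1 <= s ^ 2) by nra.
  assert (T1 : 0 <= t1 <= 1).
  { unfold t1; split; [apply Rmult_le_pos; [nra| apply Rlt_le, Rinv_0_lt_compat; lra]|].
    apply le_div1; [lra|]; unfold s; nra. }
  assert (T2 : 0 <= t2 <= 1).
  { unfold t2; split; [apply Rmult_le_pos; [nra| apply Rlt_le, Rinv_0_lt_compat; lra]|].
    apply le_div1; [lra|]; unfold s; nra. }
  assert (T3 : 0 <= t3 <= 1).
  { unfold t3; split; [apply Rmult_le_pos; [nra| apply Rlt_le, Rinv_0_lt_compat; lra]|].
    apply le_div1; [lra|]; unfold s in *; nra. }
  assert (T4 : 0 <= t4).
  { unfold t4; apply Rmult_le_pos; [nra| apply Rlt_le, Rinv_0_lt_compat; lra]. }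
  assert (T5 : 0 <= t5 <= 1).
  { unfold t5; split; [apply Rmult_le_pos; [nra| apply Rlt_le, Rinv_0_lt_compat; lra]|].
    apply le_div1; [lra|]. unfold s. assert (0 <= x ^ 2 * (x - 1) ^ 2) by (apply Rmult_le_pos; apply pow2_ge_0). assert (0 <= x ^ 3) by nra. nra. }
  assert (T6 : 0 <= t6 <= 1).
  { unfold t6; split; [apply Rmult_le_pos; [nra| apply Rlt_le, Rinv_0_lt_compat; lra]|].
    apply le_div1; [lra|]; unfold s; nra. }
  clearbody t1 t2 t3 t4 t5 t6 s.
  assert (B0 : kco g + / 2 * (1 - g) ^ 2 + 2 * p * (1 - g) * t1 + p ^ 2 * t6 - p * t4 / 2
               <= mm ^ 2 / 2 + (1 + mm) ^ 2 / 2 + 2 * P + P ^ 2).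
  { unfold kco.
    assert (g * (g - 1) / 2 <= mm ^ 2 / 2) by nra.
    assert (/ 2 * (1 - g) ^ 2 <= (1 + mm) ^ 2 / 2) by nra.
    assert (0 <= p * g * t1) by (apply Rmult_le_pos; nra).
    assert (p * t1 <= p) by nra.
    assert (2 * p * (1 - g) * t1 <= 2 * P) by nra.
    assert (p ^ 2 * t6 <= P ^ 2) by nra.
    assert (0 <= p * t4) by nra.
    lra. }
  assert (B1 : - p * t2 * (beta + (g - 1) * alpha / 2) + p ^ 2 * alpha * t5 + p * alpha * t3
               <= 2 * alpha * P + alpha * P ^ 2).
  { assert (0 <= p * t2) by nra.
    assert (0 <= p * t2 * (beta + g * alpha / 2)) by (apply Rmult_le_pos; nra).
    assert (p * t2 * alpha <= P * alpha) by (apply Rmult_le_compat_r; nra).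
    assert (p ^ 2 * t5 <= P ^ 2) by nra.
    assert (p ^ 2 * alpha * t5 <= alpha * P ^ 2) by nra.
    assert (p * t3 <= P) by nra.
    assert (p * alpha * t3 <= alpha * P) by nra.
    nra. }
  unfold Kc.
  assert (0 <= 2 * alpha * P + alpha * P ^ 2) by nra.
  assert (0 <= mm ^ 2 / 2 + (1 + mm) ^ 2 / 2 + 2 * P + P ^ 2) by nra.
  nra.
Qed.


Definition smooth (u : R -> R) := forall n x, ex_derive (Derive_n u n) x.

Lemma smooth_d u n x : smooth u -> is_derive (Derive_n u n) x (Derive_n u (S n) x).
Proof. intros H. exact (Derive_correct _ _ (H n x)). Qed.

Lemma Lbase (v1 v2 : R -> R) alpha V x :
  is_derive v1 x (v2 x) ->
  is_derive (fun y => fcoef alpha V y * v1 y) x ((V * (alpha / 2) + x) * v1 x + fcoef alpha V x * v2 x).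
Proof.
  intros H. unfold fcoef. auto_derive.
  - eexists; eauto.
  - replace (Derive (fun y => v1 y) x) with (v2 x) by (symmetry; apply is_derive_unique; exact H). field.
Qed.

Lemma Lstep (v1 v2 v3 v4 : R -> R) alpha beta V g x :
  is_derive v1 x (v2 x) -> is_derive v2 x (v3 x) -> is_derive v3 x (v4 x) ->
  is_derive (fun y => fcoef alpha V y * v3 y + hco alpha beta V g y * v2 y + kco g * v1 y) x
    (fcoef alpha V x * v4 x + hco alpha beta V (g + 1) x * v3 x + kco (g + 1) * v2 x).
Proof.
  intros H1 H2 H3. unfold fcoef, hco, kco. auto_derive.
  - repeat split; eexists; eauto.
  - replace (Derive (fun y => v1 y) x) with (v2 x) by (symmetry; apply is_derive_unique; exact H1).
    replace (Derive (fun y => v2 y) x) with (v3 x) by (symmetry; apply is_derive_unique; exact H2).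
    replace (Derive (fun y => v3 y) x) with (v4 x) by (symmetry; apply is_derive_unique; exact H3).
    field.
Qed.

Lemma DLop alpha beta V u : smooth u -> forall g x,
  Derive_n (Lop alpha beta V u) g x =
  fcoef alpha V x * Derive_n u (S (S g)) x + hco alpha beta V (INR g) x * Derive_n u (S g) x
  + kco (INR g) * Derive_n u g x.
Proof.
  intros Hs g. induction g as [|g IH]; intros x.
  - change (Derive_n (Lop alpha beta V u) 0 x) with (Lop alpha beta V u x). unfold Lop.
    replace (Derive (fun y => fcoef alpha V y * Derive u y) x)
      with ((V * (alpha / 2) + x) * Derive u x + fcoef alpha V x * Derive (Derive u) x).
    2:{ symmetry; apply is_derive_unique. apply Lbase. exact (smooth_d u 1 x Hs). }
    change (Derive_n u 2 x) with (Derive (Derive u) x).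
    change (Derive_n u 1 x) with (Derive u x).
    change (Derive_n u 0 x) with (u x). change (INR 0) with 0.
    unfold hco, kco, gcoef. field.
  - change (Derive_n (Lop alpha beta V u) (S g) x) with (Derive (Derive_n (Lop alpha beta V u) g) x).
    rewrite (Derive_ext _ _ x IH).
    apply is_derive_unique. rewrite S_INR.
    apply Lstep; apply smooth_d; exact Hs.
Qed.

Lemma Sstep (v1 v2 v3 : R -> R) g x :
  is_derive v1 x (v2 x) -> is_derive v2 x (v3 x) ->
  is_derive (fun y => - (y * v2 y + g * v1 y)) x (- (x * v3 x + (g + 1) * v2 x)).
Proof.
  intros H1 H2. auto_derive.
  - repeat split; eexists; eauto.
  - replace (Derive (fun y => v1 y) x) with (v2 x) by (symmetry; apply is_derive_unique; exact H1).
    replace (Derive (fun y => v2 y) x) with (v3 x) by (symmetry; apply is_derive_unique; exact H2).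
    field.
Qed.

Lemma Dsig phi : smooth phi -> forall g x,
  Derive_n (sigma_op phi) g x = - (x * Derive_n phi (S g) x + INR g * Derive_n phi g x).
Proof.
  intros Hs g. induction g as [|g IH]; intros x.
  - change (Derive_n (sigma_op phi) 0 x) with (sigma_op phi x). unfold sigma_op.
    replace (Derive (fun y => y * phi y) x) with (phi x + x * Derive phi x).
    2:{ symmetry; apply is_derive_unique.
        pose proof (smooth_d phi 0 x Hs) as H. simpl in H.
        auto_derive. { eexists; eauto. }
        replace (Derive (fun y => phi y) x) with (Derive phi x) by reflexivity.
        replace (Derive (fun y => phi y) x) with (Derive phi x) by reflexivity. field. }
    change (Derive_n phi 1 x) with (Derive phi x).
    change (Derive_n phi 0 x) with (phi x). change (INR 0) with 0. field.
  - change (Derive_n (sigma_op phi) (S g) x) with (Derive (Derive_n (sigma_op phi) g) x).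
    rewrite (Derive_ext _ _ x IH).
    apply is_derive_unique. rewrite S_INR.
    apply Sstep; apply smooth_d; exact Hs.
Qed.


Lemma Dn_zero (u : R -> R) r R0 n x :
  (forall y, (y < r \/ R0 < y) -> u y = 0) -> (x < r \/ R0 < x) -> Derive_n u n x = 0.
Proof.
  intros Hz Hx.
  rewrite (Derive_n_ext_loc u (fun _ => 0)).
  - destruct n; [reflexivity|]. apply Derive_n_const.
  - destruct Hx as [Hx|Hx].
    + apply (filter_imp (fun y => y < r)).
      * intros y Hy; apply Hz; now left.
      * apply (open_lt r x Hx).
    + apply (filter_imp (fun y => R0 < y)).
      * intros y Hy; apply Hz; now right.
      * apply (open_gt R0 x Hx).
Qed.

Lemma weight_d a b g x :
  is_derive (weight a b g) x
    (weight a b g x * (2 * (2 * a + 2 * INR g * b) * x / (1 + x ^ 2))).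
Proof.
  unfold weight, Rpower. auto_derive.
  - nra.
  - replace (x * (x * 1)) with (x ^ 2) by ring. field. nra.
Qed.

Lemma weight_pos a b g x : 0 < weight a b g x.
Proof. unfold weight, Rpower. apply exp_pos. Qed.

Lemma sum_le3 (A B Cn : nat -> R) K n :
  (forall i, (i <= n)%nat -> A i + / 2 * B i <= K * Cn i) ->
  sum_f_R0 A n + / 2 * sum_f_R0 B n <= K * sum_f_R0 Cn n.
Proof.
  induction n as [|n IH]; intros H.
  - simpl. apply H. lia.
  - simpl. pose proof (H (S n) (le_n _)).
    assert (sum_f_R0 A n + / 2 * sum_f_R0 B n <= K * sum_f_R0 Cn n)
      by (apply IH; intros; apply H; lia).
    lra.
Qed.

Lemma sum_quad (T J N : nat -> R) Sc n :
  (forall i, (i <= n)%nat -> 0 <= T i - 2 * Sc * J i + Sc ^ 2 * N i) ->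
  0 <= sum_f_R0 T n - 2 * Sc * sum_f_R0 J n + Sc ^ 2 * sum_f_R0 N n.
Proof.
  induction n as [|n IH]; intros H.
  - simpl. apply H. lia.
  - simpl. pose proof (H (S n) (le_n _)).
    assert (0 <= sum_f_R0 T n - 2 * Sc * sum_f_R0 J n + Sc ^ 2 * sum_f_R0 N n)
      by (apply IH; intros; apply H; lia).
    lra.
Qed.

Lemma sqrt_one x : sqrt x = 1 -> x = 1.
Proof.
  intros H. destruct (Rle_lt_dec x 0) as [Hx|Hx].
  - rewrite sqrt_neg_0 in H; lra.
  - rewrite <- (sqrt_sqrt x) by lra. rewrite H; ring.
Qed.


Lemma conv (h1 h2 : R -> R) M : (forall x, h1 x = h2 x) -> 0 <= M ->
  (forall x, M <= x -> h2 x = 0) -> (forall x, continuous h2 x) -> int0inf h1 = RInt h2 0 M.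
Proof.
  intros He HM Hz Hc.
  replace h1 with h2 by (apply functional_extensionality; intros; symmetry; apply He).
  apply int0inf_RInt; auto.
Qed.

Ltac exd := match goal with
  | |- ex_derive _ ?x =>
    first [ (eexists; now eauto)
          | match goal with H : forall n y, ex_derive (Derive_n ?u n) y, g : nat |- _ =>
              first [exact (H g x) | exact (H (S g) x) | exact (H (S (S g)) x)
                    | exact (H (S (S (S g))) x)] end ]
  end.

Ltac contm := intros; apply cont_of_ex; auto_derive;
  repeat split; try exd; try nra.

Theorem lemma6p2 (alpha beta : R) (m : nat) (a b : R) :
  0 <= alpha -> 0 <= beta -> 0 <= a -> 1 / 2 <= b ->
  exists C : R,
    forall (mlam t W : R), 0 < mlam -> 0 <= t ->
    forall u : R -> R, test_fn u ->
    forall phi : R -> R, test_fn phi -> normH1 m a b phi = 1 ->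
      ipH1 m a b (Lop alpha beta (Vcoef beta mlam t W) u) u
      + 1 / 2 * (Rabs (ipH1 m a b u (sigma_op phi))) ^ 2
      <= C * (1 + Vcoef beta mlam t W) * ipH1 m a b u u.
Proof.
  intros Ha Hb Haa Hbb.
  set (P := 2 * a + 2 * INR m * b).
  exists (Kc (INR m) P alpha).
  intros mlam t W Hml Ht u [Hsu [r1 [R1 [Hr1 [HrR1 Hzu]]]]] phi [Hsp [r2 [R2 [Hr2 [HrR2 Hzp]]]]] Hn.
  set (V := Vcoef beta mlam t W).
  assert (HV : 0 < V) by (unfold V, Vcoef; apply Rmult_lt_0_compat; [lra | apply exp_pos]).
  set (M := Rmax R1 R2 + 1).
  assert (HM1 : R1 < M) by (unfold M; pose proof (Rmax_l R1 R2); lra).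
  assert (HM2 : R2 < M) by (unfold M; pose proof (Rmax_r R1 R2); lra).
  assert (HM : 0 <= M) by lra.
  assert (DU : forall n x, is_derive (Derive_n u n) x (Derive_n u (S n) x))
    by (intros; apply smooth_d; exact Hsu).
  assert (DP : forall n x, is_derive (Derive_n phi n) x (Derive_n phi (S n) x))
    by (intros; apply smooth_d; exact Hsp).
  assert (DW := weight_d a b).
  assert (ZU : forall n x, M <= x -> Derive_n u n x = 0)
    by (intros; apply (Dn_zero u r1 R1); auto; right; lra).
  assert (ZP : forall n x, M <= x -> Derive_n phi n x = 0)
    by (intros; apply (Dn_zero phi r2 R2); auto; right; lra).
  assert (ZU0 : forall n, Derive_n u n 0 = 0)
    by (intros; apply (Dn_zero u r1 R1); auto; left; lra).
  assert (ZUM : forall n, Derive_n u n M = 0) by (intros; apply ZU; lra).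
  assert (E1 : ipH1 m a b (Lop alpha beta V u) u = sum_f_R0 (fun g =>
     RInt (fun x => weight a b g x * (fcoef alpha V x * Derive_n u (S (S g)) x
        + hco alpha beta V (INR g) x * Derive_n u (S g) x + kco (INR g) * Derive_n u g x)
        * Derive_n u g x) 0 M) m).
  { unfold ipH1. apply sum_eq. intros g _. apply conv; auto.
    - intros x. rewrite DLop by exact Hsu. reflexivity.
    - intros x Hx. rewrite (ZU g x Hx). ring.
    - unfold fcoef, hco, kco. contm. }
  assert (E2 : ipH1 m a b u u = sum_f_R0 (fun g =>
     RInt (fun x => weight a b g x * Derive_n u g x * Derive_n u g x) 0 M) m).
  { unfold ipH1. apply sum_eq. intros g _. apply conv; auto.
    - intros x Hx. rewrite (ZU g x Hx). ring.
    - contm. }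
  assert (E4 : ipH1 m a b phi phi = sum_f_R0 (fun g =>
     RInt (fun x => weight a b g x * Derive_n phi g x * Derive_n phi g x) 0 M) m).
  { unfold ipH1. apply sum_eq. intros g _. apply conv; auto.
    - intros x Hx. rewrite (ZP g x Hx). ring.
    - contm. }
  assert (E3 : ipH1 m a b u (sigma_op phi) = sum_f_R0 (fun g =>
     RInt (fun x => weight a b g x * Derive_n phi g x * (x * Derive_n u (S g) x
        + cco (2 * a + 2 * INR g * b) (INR g) x * Derive_n u g x)) 0 M) m).
  { unfold ipH1. apply sum_eq. intros g _.
    rewrite (conv _ (fun x => weight a b g x * Derive_n u g x *
       (- (x * Derive_n phi (S g) x + INR g * Derive_n phi g x))) M); auto.
    - apply (proj1 (level_S (weight a b g) (Derive_n u g) (Derive_n u (S g)) (Derive_n u (S (S g)))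
        (Derive_n phi g) (Derive_n phi (S g)) (Derive_n phi (S (S g)))
        (2 * a + 2 * INR g * b) (INR g) M (DW g) (weight_pos a b g) (DU g) (DU (S g))
        (DP g) (DP (S g)) HM (ZU0 g) (ZUM g))).
    - intros x. rewrite Dsig by exact Hsp. reflexivity.
    - intros x Hx. rewrite (ZU g x Hx). ring.
    - contm. }
  assert (HN1 : ipH1 m a b phi phi = 1) by (apply sqrt_one; exact Hn).
  rewrite E4 in HN1.
  rewrite E1, E2, E3, pow2_abs.
  set (Sc := sum_f_R0 (fun g =>
     RInt (fun x => weight a b g x * Derive_n phi g x * (x * Derive_n u (S g) x
        + cco (2 * a + 2 * INR g * b) (INR g) x * Derive_n u g x)) 0 M) m).
  assert (HA1 : forall i, (i <= m)%nat ->
    RInt (fun x => weight a b i x * (fcoef alpha V x * Derive_n u (S (S i)) x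
        + hco alpha beta V (INR i) x * Derive_n u (S i) x + kco (INR i) * Derive_n u i x)
        * Derive_n u i x) 0 M
    + / 2 * RInt (fun x => weight a b i x *
        (x * Derive_n u (S i) x + cco (2 * a + 2 * INR i * b) (INR i) x * Derive_n u i x) ^ 2) 0 M
    <= Kc (INR m) P alpha * (1 + V) * RInt (fun x => weight a b i x * Derive_n u i x * Derive_n u i x) 0 M).
  { intros i Hi.
    apply (level_L (weight a b i) (Derive_n u i) (Derive_n u (S i)) (Derive_n u (S (S i)))
        (Derive_n u (S (S (S i)))) (2 * a + 2 * INR i * b) (INR i) alpha beta V M);
      auto; try lra.
    all: try (intros x Hx; apply Rco_bound; auto; try lra).
    - apply weight_pos.
    - pose proof (pos_INR i). pose proof (le_INR _ _ Hi). unfold P. nra.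
    - pose proof (pos_INR i). pose proof (le_INR _ _ Hi). lra. }
  assert (HA2 : forall i, (i <= m)%nat ->
    0 <= RInt (fun x => weight a b i x *
        (x * Derive_n u (S i) x + cco (2 * a + 2 * INR i * b) (INR i) x * Derive_n u i x) ^ 2) 0 M
      - 2 * Sc * RInt (fun x => weight a b i x * Derive_n phi i x * (x * Derive_n u (S i) x
        + cco (2 * a + 2 * INR i * b) (INR i) x * Derive_n u i x)) 0 M
      + Sc ^ 2 * RInt (fun x => weight a b i x * Derive_n phi i x * Derive_n phi i x) 0 M).
  { intros i Hi.
    apply (proj2 (level_S (weight a b i) (Derive_n u i) (Derive_n u (S i)) (Derive_n u (S (S i)))
        (Derive_n phi i) (Derive_n phi (S i)) (Derive_n phi (S (S i)))
        (2 * a + 2 * INR i * b) (INR i) M (DW i) (weight_pos a b i) (DU i) (DU (S i))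
        (DP i) (DP (S i)) HM (ZU0 i) (ZUM i))). }
  pose proof (sum_le3 _ _ _ _ m HA1) as A1.
  pose proof (sum_quad _ _ _ Sc m HA2) as A2.
  rewrite HN1 in A2. fold Sc in A1, A2.
  nra.
Qed.
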